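(* Let $T=(p,q:F\to E)$ be a textile system with $p$ and $q$ surjective. Let $G_T$ be the associated 2-colored graph and $\sim$ the associated equivalence relation on its path category $G_T^*$. Then the quotient category $\Lambda_T=G_T^*/\sim$, with degree induced by the colors, is a 2-graph if and only if $T$ is LR.
   Context: Directed graph $E=(E^0,E^1,r,s)$. Textile system $T=(p,q:F\to E)$: graph homomorphisms $p,q$ (maps on vertices and edges commuting with $r,s$) with $f\mapsto(r(f),p(f),s(f),q(f))$ injective on $F^1$. LR: $p$ has unique $r$-path lifting (for $v\in F^0,e\in E^1$ with $p(v)=r(e)$, exactly one $f\in F^1$ with $r(f)=v,p(f)=e$) and $q$ has unique $s$-path lifting (same with $s$). A 2-graph is a countable category $\Lambda$ with a functor $d:\Lambda\to\mathbb N^2$ such that if $d(\lambda)=m+n$ there are unique $\mu,\nu$ with $d(\mu)=m,d(\nu)=n,\lambda=\mu\nu$ (composition $\mu\nu$ when $s(\mu)=r(\nu)$). The 2-colored graph $G_T$: vertices $E^0$; edges $E^1\sqcup F^0$; edges $e\in E^1$ have color $\varepsilon_1$ and range, source from $E$; edges $w\in F^0$ have color $\varepsilon_2$, $s(w)=p(w)$, $r(w)=q(w)$. Paths are composed right to left ($\alpha\beta$ is a path when $s(\alpha)=r(\beta)$), and the degree of a path counts edges of each color. The relation $\sim$: each vertex and edge is equivalent only to itself; on two-edge two-colored paths, $ve\sim e'w$ iff there is $f\in F^1$ with $r(f)=v$, $s(f)=w$, $p(f)=e$, $q(f)=e'$; $\sim$ is extended to all paths as the equivalence relation generated by these relations and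 compatible with concatenation ($[\lambda\mu]=[\lambda][\mu]$). *)

(* Defs.v *)
From mathcomp Require Import all_boot.

Set Implicit Arguments.
Unset Strict Implicit.
Unset Printing Implicit Defensive.

Record graph := Graph {
  vtx : countType;
  edg : countType;
  rg : edg -> vtx;
  sc : edg -> vtx
}.

Record ghom (F E : graph) := GHom {
  hv : vtx F -> vtx E;
  he : edg F -> edg E;
  hom_r : forall f, rg (he f) = hv (rg f);
  hom_s : forall f, sc (he f) = hv (sc f)
}.

Definition surjective_hom (F E : graph) (p : ghom F E) : Prop :=
  (forall v : vtx E, exists w, hv p w = v) /\
  (forall e : edg E, exists f, he p f = e).

Definition textile (F E : graph) (p q : ghom F E) : Prop :=
  forall f g : edg F,
    rg f = rg g -> he p f = he p g -> sc f = sc g -> he q f = he q g -> f = g.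

Definition LR (F E : graph) (p q : ghom F E) : Prop :=
  (forall (v : vtx F) (e : edg E), hv p v = rg e ->
      exists! f : edg F, rg f = v /\ he p f = e) /\
  (forall (v : vtx F) (e : edg E), hv q v = sc e ->
      exists! f : edg F, sc f = v /\ he q f = e).

Section TwoColoredGraph.
Variables (F E : graph) (p q : ghom F E).

(* Edges of G_T: E^1 (color eps1, inl) and F^0 (color eps2, inr). *)
Definition GTedge : Type := (edg E + vtx F)%type.

Definition gt_r (a : GTedge) : vtx E :=
  match a with inl e => rg e | inr w => hv q w end.
Definition gt_s (a : GTedge) : vtx E :=
  match a with inl e => sc e | inr w => hv p w end.

(* A path of G_T is represented by its range vertex x together with its
   sequence of edges [a_1; ...; a_n], composed right to left:
   r(a_1) = x and s(a_i) = r(a_{i+1}).  The empty sequence is the vertex x. *)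
Definition GTpath : Type := (vtx E * seq GTedge)%type.

Fixpoint valid_from (x : vtx E) (l : seq GTedge) : Prop :=
  match l with
  | [::] => True
  | a :: l' => gt_r a = x /\ valid_from (gt_s a) l'
  end.

Definition is_path (la : GTpath) : Prop := valid_from la.1 la.2.

Definition prange (la : GTpath) : vtx E := la.1.
Definition psource (la : GTpath) : vtx E := last la.1 (map gt_s la.2).

(* Concatenation lambda mu (meaningful when psource lambda = prange mu). *)
Definition pcat (la mu : GTpath) : GTpath := (la.1, la.2 ++ mu.2).

Definition is_col1 (a : GTedge) : bool := if a is inl _ then true else false.
Definition is_col2 (a : GTedge) : bool := if a is inr _ then true else false.
Definition pdeg (la : GTpath) : nat * nat :=
  (count is_col1 la.2, count is_col2 la.2).

Definition addNN (m n : nat * nat) : nat * nat := (m.1 + n.1, m.2 + n.2)%N.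

Definition basic_rel (la mu : GTpath) : Prop :=
  exists f : edg F,
    la = (hv q (rg f), [:: inr (rg f); inl (he p f)]) /\
    mu = (hv q (rg f), [:: inl (he q f); inr (sc f)]).

Inductive sim : GTpath -> GTpath -> Prop :=
  | sim_refl la : is_path la -> sim la la
  | sim_sym la mu : sim la mu -> sim mu la
  | sim_trans la mu nu : sim la mu -> sim mu nu -> sim la nu
  | sim_basic la mu : basic_rel la mu -> sim la mu
  | sim_cat la la' mu mu' :
      sim la la' -> sim mu mu' ->
      psource la = prange mu -> psource la' = prange mu' ->
      sim (pcat la mu) (pcat la' mu').

(* Lambda_T = G_T^* / ~ (morphisms = ~-classes of paths, composition induced
   by concatenation, degree induced by the colors) is a 2-graph:
   the degree is well defined on classes, and every class [lambda] with
   d(lambda) = m + n factors uniquely as [mu][nu] with d(mu) = m, d(nu) = n. *)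
Definition Lambda_T_is_2graph : Prop :=
  (forall la la', sim la la' -> pdeg la = pdeg la') /\
  (forall la (m n : nat * nat), is_path la -> pdeg la = addNN m n ->
     exists mu nu, is_path mu /\ is_path nu /\ psource mu = prange nu /\
                   pdeg mu = m /\ pdeg nu = n /\ sim la (pcat mu nu)) /\
  (forall mu nu mu' nu',
     is_path mu -> is_path nu -> is_path mu' -> is_path nu' ->
     psource mu = prange nu -> psource mu' = prange nu' ->
     pdeg mu = pdeg mu' -> pdeg nu = pdeg nu' ->
     sim (pcat mu nu) (pcat mu' nu') ->
     sim mu mu' /\ sim nu nu').

End TwoColoredGraph.

(* Main.v *)
Require Import Defs.
From mathcomp Require Import all_boot.
From Stdlib Require Import Classical ClassicalEpsilon.
From mathcomp Require Import zify.

Set Implicit Arguments.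
Unset Strict Implicit.
Unset Printing Implicit Defensive.

Section Aux.
Variables (F E : graph) (p q : ghom F E).

Local Notation sim := (sim p q).
Local Notation valid := (valid_from p q).
Local Notation ed := (GTedge F E).

Lemma valid_cat x (l1 l2 : seq ed) :
  valid x (l1 ++ l2) <-> valid x l1 /\ valid (last x (map (gt_s p) l1)) l2.
Proof.
elim: l1 x => [|a l1 IH] x /=; first by tauto.
rewrite IH; tauto.
Qed.

Lemma sim_valid la mu : sim la mu -> is_path p q la /\ is_path p q mu.
Proof.
elim => {la mu}.
- by move=> la H.
- by move=> la mu _ [H1 H2].
- by move=> la mu nu _ [H1 _] _ [_ H2].
- move=> la mu [f [-> ->]]; rewrite /is_path /=.
  by rewrite !hom_r hom_s.
- move=> la la' mu mu' _ [H1 H2] _ [H3 H4] E1 E2; rewrite /is_path /pcat /=.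
  rewrite !valid_cat; split; split => //.
  + by rewrite /psource in E1; rewrite E1.
  + by rewrite /psource in E2; rewrite E2.
Qed.

Lemma sim_range la mu : sim la mu -> la.1 = mu.1.
Proof.
elim => {la mu}; first by [].
- by move=> la mu _ ->.
- by move=> la mu nu _ -> _ ->.
- by move=> la mu [f [-> ->]].
- by move=> la la' mu mu' _ H _ _ _ _; rewrite /pcat /= H.
Qed.

Lemma psource_cat la mu : psource p la = prange mu ->
  psource p (pcat la mu) = psource p mu.
Proof.
rewrite /psource /pcat /prange /= map_cat last_cat => ->; done.
Qed.

Lemma sim_source la mu : sim la mu -> psource p la = psource p mu.
Proof.
elim => {la mu}; first by [].
- by move=> la mu _ ->.
- by move=> la mu nu _ -> _ ->.
- move=> la mu [f [-> ->]]; rewrite /psource /=. by rewrite hom_s.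
- move=> la la' mu mu' _ _ _ H E1 E2.
  by rewrite !psource_cat.
Qed.

Lemma sim_size la mu : sim la mu ->
  size la.2 = size mu.2 /\ (size la.2 <= 1 -> la = mu).
Proof.
elim => {la mu}; first by [].
- move=> la mu _ [Es H]; split => // h; symmetry; apply: H; by rewrite Es.
- move=> la mu nu _ [E1 H1] _ [E2 H2]; split; first by rewrite E1.
  move=> h; have e1 := H1 h; subst mu; exact: H2.
- by move=> la mu [f [-> ->]].
- move=> la la' mu mu' _ [S1 H1] _ [S2 H2] _ _; rewrite /pcat /= !size_cat S1 S2.
  split => // h.
  have h1 : size la.2 <= 1 by rewrite S1; apply: leq_trans h; apply: leq_addr.
  have h2 : size mu.2 <= 1 by rewrite S2; apply: leq_trans h; apply: leq_addl.
  by rewrite (H1 h1) (H2 h2).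
Qed.


Lemma sim_deg la mu : sim la mu -> pdeg la = pdeg mu.
Proof.
elim => {la mu}; first by [].
- by move=> la mu _ ->.
- by move=> la mu nu _ -> _ ->.
- by move=> la mu [f [-> ->]].
- move=> la la' mu mu' _ H1 _ H2 _ _; move: H1 H2.
  rewrite /pdeg /pcat /= !count_cat.
  by case => -> -> [-> ->].
Qed.

Lemma sim_ctx x k y m m' r : sim (y, m) (y, m') ->
  valid x (k ++ m ++ r) -> y = last x (map (gt_s p) k) ->
  sim (x, k ++ m ++ r) (x, k ++ m' ++ r).
Proof.
move=> S V Ey.
move: V; rewrite !valid_cat => -[Vk]; rewrite -Ey => -[Vm Vr].
have S2 : sim (y, m ++ r) (y, m' ++ r).
  have := @sim_cat _ _ p q (y, m) (y, m') (psource p (y,m), r) (psource p (y, m), r) S.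
  rewrite /pcat /=; apply => //.
  - by apply: sim_refl.
  - by rewrite (sim_source S).
have := @sim_cat _ _ p q (x, k) (x, k) (y, m ++ r) (y, m' ++ r).
rewrite /pcat /=; apply => //.
by apply: sim_refl.
Qed.


Local Notation Inl := (@inl (edg E) (vtx F)).
Local Notation Inr := (@inr (edg E) (vtx F)).

Definition lift (v : vtx F) (e : edg E) : option (edg F) :=
  match excluded_middle_informative (exists f, rg f = v /\ he p f = e) with
  | left H => Some (proj1_sig (constructive_indefinite_description _ H))
  | right _ => None
  end.

Lemma lift_spec v e f : lift v e = Some f -> rg f = v /\ he p f = e.
Proof.
rewrite /lift; destruct (excluded_middle_informative _) as [H|H] => // -[<-].
exact: proj2_sig (constructive_indefinite_description _ H).
Qed.

Lemma lift_ex v e : (exists f, rg f = v /\ he p f = e) ->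
  exists f, lift v e = Some f.
Proof.
move=> H; rewrite /lift; destruct (excluded_middle_informative _) as [H'|H'].
- by eexists.
- by case: (H' H).
Qed.

Fixpoint pass (v : vtx F) (A : seq (edg E)) : seq (edg E) * vtx F :=
  match A with
  | [::] => ([::], v)
  | e :: A' => match lift v e with
               | Some f => (he q f :: (pass (sc f) A').1, (pass (sc f) A').2)
               | None => (e :: A', v)
               end
  end.

Definition step (a : ed) (N : seq (edg E) * seq (vtx F)) :=
  match a with
  | inl e => (e :: N.1, N.2)
  | inr v => ((pass v N.1).1, (pass v N.1).2 :: N.2)
  end.

Fixpoint nf (l : seq ed) : seq (edg E) * seq (vtx F) :=
  match l with
  | [::] => ([::], [::])
  | a :: l' => step a (nf l')
  end.

Definition toword (N : seq (edg E) * seq (vtx F)) : seq ed :=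
  map Inl N.1 ++ map Inr N.2.

Lemma nf_ctx k x y : nf x = nf y -> nf (k ++ x) = nf (k ++ y).
Proof. by elim: k => [|a k IH] //= H; rewrite IH. Qed.

Lemma pass_size v A : size (pass v A).1 = size A.
Proof.
elim: A v => [|e A IH] v //=.
by case: (lift v e) => [f|] //=; rewrite IH.
Qed.

Lemma nf_size l : size (nf l).1 = count (@is_col1 F E) l /\
                  size (nf l).2 = count (@is_col2 F E) l.
Proof.
elim: l => [|[e|v] l [IH1 IH2]] //=.
- by rewrite IH1 IH2 add0n.
- by rewrite pass_size IH1 IH2 add0n.
Qed.

Lemma nf_inl A l : nf (map Inl A ++ l) = (A ++ (nf l).1, (nf l).2).
Proof. by elim: A => [|e A IH] /=; [case: (nf l) | rewrite IH]. Qed.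

Lemma nf_inr l B : nf (l ++ map Inr B) = ((nf l).1, (nf l).2 ++ B).
Proof.
elim: l => [|[e|v] l IH] /=.
- elim: B => [|w B IHB] //=; by rewrite IHB.
- by rewrite IH.
- by rewrite IH.
Qed.

Lemma count1_inl A : count (@is_col1 F E) (map Inl A) = size A.
Proof. by elim: A => //= a A ->. Qed.
Lemma count2_inl A : count (@is_col2 F E) (map Inl A) = 0.
Proof. by elim: A. Qed.
Lemma count1_inr B : count (@is_col1 F E) (map Inr B) = 0.
Proof. by elim: B. Qed.
Lemma count2_inr B : count (@is_col2 F E) (map Inr B) = size B.
Proof. by elim: B => //= a A ->. Qed.

Section WithLR.
Hypothesis HLR : LR p q.

Lemma lift_eq f : lift (rg f) (he p f) = Some f.
Proof.
have [f' Hf'] := lift_ex (ex_intro _ f (conj erefl erefl)).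
rewrite Hf'; have [h1 h2] := lift_spec Hf'.
have [g [_ U]] := (HLR.1 (rg f) (he p f) (esym (hom_r p f))).
by rewrite -(U f (conj erefl erefl)) -(U f' (conj h1 h2)).
Qed.

Lemma sim_nf la mu : sim la mu -> forall l, nf (la.2 ++ l) = nf (mu.2 ++ l).
Proof.
elim => {la mu}; first by [].
- by move=> la mu _ H l; rewrite H.
- by move=> la mu nu _ H1 _ H2 l; rewrite H1 H2.
- move=> la mu [f [-> ->]] l /=.
  by rewrite /step /= lift_eq.
- move=> la la' mu mu' _ H1 _ H2 _ _ l; rewrite /pcat /= -!catA.
  rewrite H1; apply: nf_ctx; exact: H2.
Qed.


Lemma nf_inl0 C : nf (map Inl C) = (C, [::]).
Proof. by have := nf_inl C [::]; rewrite !cats0. Qed.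

Lemma lift_some v e : rg e = hv p v -> exists f, lift v e = Some f.
Proof.
move=> He; have [f [[hr hp] _]] := HLR.1 v e (esym He).
exact: lift_ex (ex_intro _ f (conj hr hp)).
Qed.

Lemma pass_sim A v : valid (hv p v) (map Inl A) ->
  sim (hv q v, Inr v :: map Inl A)
      (hv q v, map Inl (pass v A).1 ++ [:: Inr (pass v A).2]).
Proof.
elim: A v => [|e A IH] v /= V.
  by apply: sim_refl.
case: V => He VA.
have [f Hf] := lift_some He.
have [hr hp] := lift_spec Hf.
rewrite Hf /=. subst v e.
rewrite hom_s in VA.
apply: (@sim_trans _ _ p q _ (hv q (rg f), Inl (he q f) :: Inr (sc f) :: map Inl A)).
  have := @sim_ctx (hv q (rg f)) [::] (hv q (rg f)) [:: Inr (rg f); Inl (he p f)]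
            [:: Inl (he q f); Inr (sc f)] (map Inl A).
  apply => //.
  - by apply: sim_basic; exists f.
  - by rewrite /= hom_r hom_s.
have S := IH _ VA.
have := @sim_ctx (hv q (rg f)) [:: Inl (he q f)] (hv q (sc f)) _ _ [::] S.
rewrite !cats0 /=; apply.
- by rewrite /= hom_r hom_s.
- by rewrite hom_s.
Qed.

Lemma nf_sim l x : valid x l -> sim (x, l) (x, toword (nf l)).
Proof.
elim: l x => [|[e|v] l IH] x /= V.
- by apply: sim_refl.
- case: V => Hr Vl.
  have S := IH _ Vl.
  have := @sim_ctx x [:: Inl e] _ _ _ [::] S.
  rewrite !cats0 /toword /=; apply => //.
- case: V => Hq Vl.
  have S := IH _ Vl.
  have S1 := @sim_ctx x [:: Inr v] _ _ _ [::] S.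
  rewrite !cats0 /= in S1.
  have S1' := S1 (conj Hq Vl) erefl.
  have V2 := (sim_valid S).2.
  rewrite /is_path /toword /= valid_cat in V2.
  have VA := V2.1.
  have P := pass_sim VA.
  subst x.
  apply: (sim_trans S1').
  have := @sim_ctx (hv q v) [::] (hv q v) _ _ (map Inr (nf l).2) P.
  rewrite /= -catA /= /toword /step /=.
  apply => //.
  have := (sim_valid S1').2.
  by rewrite /is_path /toword /=.
Qed.

Lemma nf_valid l x : valid x l -> valid x (toword (nf l)).
Proof. by move=> V; exact: (sim_valid (nf_sim V)).2. Qed.

Lemma pass_inj A A' v v' : valid (hv p v) (map Inl A) ->
  valid (hv p v') (map Inl A') -> pass v A = pass v' A' -> v = v' /\ A = A'.
Proof.
elim: A A' v v' => [|e A IH] [|e' A'] v v' /= V V' H.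
- by case: H.
- case: V' => He' _.
  have [f' Hf'] := lift_some He'.
  by move: H; rewrite Hf'.
- case: V => He _.
  have [f' Hf'] := lift_some He.
  by move: H; rewrite Hf'.
- case: V => He VA; case: V' => He' VA'.
  have [f Hf] := lift_some He.
  have [f' Hf'] := lift_some He'.
  move: H; rewrite Hf Hf' => -[Hq H1 H2].
  have [r1 p1] := lift_spec Hf.
  have [r2 p2] := lift_spec Hf'.
  subst v e v' e'.
  rewrite hom_s in VA; rewrite hom_s in VA'.
  have Hp : pass (sc f) A = pass (sc f') A'.
    by rewrite [pass (sc f) A]surjective_pairing [pass (sc f') A']surjective_pairing H1 H2.
  have [Hs ->] := IH _ _ _ VA VA' Hp.
  have [g0 [_ U]] := HLR.2 (sc f) (he q f) (esym (hom_s q f)).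
  have ef : f = f'.
    by rewrite -(U f (conj erefl erefl)) -(U f' (conj (esym Hs) (esym Hq))).
  by subst f'.
Qed.

Lemma nf_inj_shape B B' C C' a a' :
  valid a (map Inr B ++ map Inl C) -> valid a' (map Inr B' ++ map Inl C') ->
  nf (map Inr B ++ map Inl C) = nf (map Inr B' ++ map Inl C') ->
  B = B' /\ C = C'.
Proof.
elim: B B' a a' => [|v B IH] [|v' B'] a a' V V' H.
- by move: H; rewrite /= !nf_inl0 => -[].
- by move: H; rewrite /= !nf_inl0.
- by move: H; rewrite /= !nf_inl0.
- move: H V V'; rewrite /= => -[H1 H2 H3] [_ V] [_ V'].
  have VA := ((valid_cat _ _ _).1 (nf_valid V)).1.
  have VA' := ((valid_cat _ _ _).1 (nf_valid V')).1.
  have Hp : pass v (nf (map Inr B ++ map Inl C)).1 = pass v' (nf (map Inr B' ++ map Inl C')).1.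
    by rewrite [pass v _]surjective_pairing [pass v' _]surjective_pairing H1 H2.
  have [ev e1] := pass_inj VA VA' Hp.
  have e2 : nf (map Inr B ++ map Inl C) = nf (map Inr B' ++ map Inl C').
    by rewrite [nf (map Inr B ++ _)]surjective_pairing [nf (map Inr B' ++ _)]surjective_pairing e1 H3.
  have [-> ->] := IH _ _ _ V V' e2.
  by rewrite ev.
Qed.

Lemma unpass A w y : valid y (map Inl A ++ [:: Inr w]) ->
  exists v A0, sim (y, map Inl A ++ [:: Inr w]) (y, Inr v :: map Inl A0).
Proof.
elim: A y => [|e A IH] y /= V.
  by exists w, [::]; apply: sim_refl.
case: V => Hr V1.
have [v1 [A1 S]] := IH _ V1.
have S1 := @sim_ctx y [:: Inl e] _ _ _ [::] S.
rewrite !cats0 /= in S1.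
have S1' := S1 (conj Hr V1) erefl.
have V2 := (sim_valid S1').2.
case: V2 => _ [Hq1 VA1].
have [f [[Hs Hqf] _]] := HLR.2 v1 e Hq1.
exists (rg f), (he p f :: A1).
apply: (sim_trans S1').
subst v1 e. rewrite hom_r in Hr. subst y.
have := @sim_ctx (hv q (rg f)) [::] (hv q (rg f)) [:: Inl (he q f); Inr (sc f)]
            [:: Inr (rg f); Inl (he p f)] (map Inl A1).
apply => //.
- by apply: sim_sym; apply: sim_basic; exists f.
- by have := (sim_valid S1').2.
Qed.

Lemma swap B A y : valid y (map Inl A ++ map Inr B) ->
  exists B' A', sim (y, map Inl A ++ map Inr B) (y, map Inr B' ++ map Inl A').
Proof.
elim: B A y => [|w B IH] A y V.
  exists [::], A; rewrite cats0 /=; apply: sim_refl.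
  by move: V; rewrite cats0.
have V0 : valid y ((map Inl A ++ [:: Inr w]) ++ map Inr B) by rewrite -catA.
have [v [A0 S]] := unpass ((valid_cat _ _ _).1 V0).1.
have S1 := @sim_ctx y [::] y _ _ (map Inr B) S.
have S1' := S1 V0 erefl.
have V3 := (sim_valid S1').2.
case: V3 => Hq V4.
have [B'' [A'' S2]] := IH _ _ V4.
have S3 := @sim_ctx y [:: Inr v] _ _ _ [::] S2.
rewrite !cats0 /= in S3.
have S3' := S3 (conj Hq V4) erefl.
exists (v :: B''), A''.
have S1'' : sim (y, map Inl A ++ map Inr (w :: B)) (y, Inr v :: map Inl A0 ++ map Inr B).
  by move: S1'; rewrite /= -catA.
exact: (sim_trans S1'' S3').
Qed.

Lemma fact_ex la m n : is_path p q la -> pdeg la = addNN m n ->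
  exists mu nu, is_path p q mu /\ is_path p q nu /\ psource p mu = prange nu /\
    pdeg mu = m /\ pdeg nu = n /\ sim la (pcat mu nu).
Proof.
case: la => x l; case: m => m1 m2; case: n => n1 n2.
rewrite /is_path /pdeg /addNN /= => V [D1 D2].
have S := nf_sim V.
have [sA sB] := nf_size l.
rewrite D1 in sA; rewrite D2 in sB.
have eW : toword (nf l) = map Inl (take m1 (nf l).1) ++
   (map Inl (drop m1 (nf l).1) ++ map Inr (take m2 (nf l).2)) ++ map Inr (drop m2 (nf l).2).
  by rewrite /toword -{1}(cat_take_drop m1 (nf l).1) -{1}(cat_take_drop m2 (nf l).2) !map_cat !catA.
rewrite eW in S.
have V' := (sim_valid S).2.
rewrite /is_path /= in V'.
have Vmid := ((valid_cat _ _ _).1 ((valid_cat _ _ _).1 V').2).1.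
have [B1' [A2' Sw]] := swap Vmid.
have S2 := sim_ctx Sw V' erefl.
have V2 := (sim_valid S2).2.
have Dsw := sim_deg Sw.
rewrite /pdeg /= !count_cat ?count1_inl ?count2_inl ?count1_inr ?count2_inr in Dsw.
case: Dsw; rewrite ?addn0 ?add0n => eA eB.
rewrite /is_path /= -!catA catA in V2.
have [Vmu Vnu] := (valid_cat _ _ _).1 V2.
exists (x, map Inl (take m1 (nf l).1) ++ map Inr B1').
exists (last x (map (gt_s p) (map Inl (take m1 (nf l).1) ++ map Inr B1')),
        map Inl A2' ++ map Inr (drop m2 (nf l).2)).
split; first exact: Vmu.
split; first exact: Vnu.
split; first by [].
split.
  have t1 : size (take m1 (nf l).1) = m1 by rewrite size_takel // sA leq_addr.
  have t2 : size (take m2 (nf l).2) = m2 by rewrite size_takel // sB leq_addr.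
  rewrite /pdeg /= !count_cat ?count1_inl ?count2_inl ?count1_inr ?count2_inr.
  by rewrite ?addn0 ?add0n -eB t1 t2.
split.
  rewrite /pdeg /= !count_cat ?count1_inl ?count2_inl ?count1_inr ?count2_inr.
  by rewrite ?addn0 ?add0n -eA !size_drop sA sB !addKn.
apply: (sim_trans S).
by move: S2; rewrite /pcat /= !catA.
Qed.

Lemma cat_inj_l (T : eqType) (s1 s2 s1' s2' : seq T) :
  size s1 = size s1' -> s1 ++ s2 = s1' ++ s2' -> s1 = s1' /\ s2 = s2'.
Proof. by move=> hs /eqP; rewrite eqseq_cat // => /andP [/eqP -> /eqP ->]. Qed.

Lemma cat_inj_r (T : eqType) (s1 s2 s1' s2' : seq T) :
  size s2 = size s2' -> s1 ++ s2 = s1' ++ s2' -> s1 = s1' /\ s2 = s2'.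
Proof.
move=> hs hc.
have hs1 : size s1 = size s1'.
  have := congr1 size hc; rewrite !size_cat hs; exact: addIn.
exact: cat_inj_l hs1 hc.
Qed.

Lemma nf_cat2 l1 l2 x y : valid x l1 -> valid y l2 ->
  nf (l1 ++ l2) =
  ((nf l1).1 ++ (nf (map Inr (nf l1).2 ++ map Inl (nf l2).1)).1,
   (nf (map Inr (nf l1).2 ++ map Inl (nf l2).1)).2 ++ (nf l2).2).
Proof.
move=> V1 V2.
rewrite (sim_nf (nf_sim V1) l2) /=.
have h2 := sim_nf (nf_sim V2) [::]; rewrite /= !cats0 in h2.
rewrite (nf_ctx (toword (nf l1)) h2) /toword -catA catA -catA.
rewrite nf_inl catA nf_inr //.
Qed.

Lemma fact_uniq mu nu mu' nu' :
  is_path p q mu -> is_path p q nu -> is_path p q mu' -> is_path p q nu' ->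
  psource p mu = prange nu -> psource p mu' = prange nu' ->
  pdeg mu = pdeg mu' -> pdeg nu = pdeg nu' ->
  sim (pcat mu nu) (pcat mu' nu') -> sim mu mu' /\ sim nu nu'.
Proof.
case: mu => x l1; case: nu => y l2; case: mu' => x' l1'; case: nu' => y' l2'.
rewrite /is_path /prange /= => V1 V2 V1' V2' Ey Ey' D1 D2 S.
have ex : x = x' := sim_range S.
have H0 := sim_nf S [::]; rewrite /pcat /= !cats0 in H0.
rewrite (nf_cat2 V1 V2) (nf_cat2 V1' V2') in H0.
case: H0 => H1 H2.
have [sa1 sb1] := nf_size l1; have [sa1' sb1'] := nf_size l1'.
have [sa2 sb2] := nf_size l2; have [sa2' sb2'] := nf_size l2'.
move: D1 D2; rewrite /pdeg /= => -[d11 d12] [d21 d22].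
have [eA1 eZ1] := cat_inj_l (etrans sa1 (etrans d11 (esym sa1'))) H1.
have [eZ2 eB2] := cat_inj_r (etrans sb2 (etrans d22 (esym sb2'))) H2.
have eZ : nf (map Inr (nf l1).2 ++ map Inl (nf l2).1) =
          nf (map Inr (nf l1').2 ++ map Inl (nf l2').1).
  by rewrite [LHS]surjective_pairing [RHS]surjective_pairing eZ1 eZ2.
have src : forall x0 l0, valid x0 l0 ->
    psource p (x0, l0) = last (last x0 (map (gt_s p) (map Inl (nf l0).1)))
                              (map (gt_s p) (map Inr (nf l0).2)).
  move=> x0 l0 V0; rewrite (sim_source (nf_sim V0)) /psource /toword /=.
  by rewrite map_cat last_cat.
have vmid : forall x0 l0 y0 l3, valid x0 l0 -> valid y0 l3 -> psource p (x0, l0) = y0 ->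
    valid (last x0 (map (gt_s p) (map Inl (nf l0).1)))
          (map Inr (nf l0).2 ++ map Inl (nf l3).1).
  move=> x0 l0 y0 l3 V0 V3 E0.
  have W0 := (valid_cat _ _ _).1 (nf_valid V0).
  have W3 := (valid_cat _ _ _).1 (nf_valid V3).
  apply/valid_cat; split; first exact: W0.2.
  by rewrite -src // E0; exact: W3.1.
have [eB1 eA2] := nf_inj_shape (vmid _ _ _ _ V1 V2 Ey) (vmid _ _ _ _ V1' V2' Ey') eZ.
have en1 : nf l1 = nf l1' by rewrite [LHS]surjective_pairing [RHS]surjective_pairing eA1 eB1.
have en2 : nf l2 = nf l2' by rewrite [LHS]surjective_pairing [RHS]surjective_pairing eA2 eB2.
subst x'.
have ey : y = y'.
  by rewrite -Ey -Ey' (sim_source (nf_sim V1)) (sim_source (nf_sim V1')) en1.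
rewrite -ey in V2' *.
have s1 : sim (x, l1) (x, l1').
  apply: sim_trans (nf_sim V1) _; rewrite en1; apply: sim_sym; exact: nf_sim V1'.
have s2 : sim (y, l2) (y, l2').
  apply: sim_trans (nf_sim V2) _; rewrite en2; apply: sim_sym; exact: nf_sim V2'.
by split.
Qed.

Lemma LR_2graph : Lambda_T_is_2graph p q.
Proof.
split; first by move=> la la' S; exact: sim_deg S.
split; first by move=> la m n; exact: fact_ex.
exact: fact_uniq.
Qed.
End WithLR.

Lemma count12 (l : seq ed) : count (@is_col1 F E) l + count (@is_col2 F E) l = size l.
Proof. by elim: l => [|[e|v] l IH] //=; rewrite -IH ?add0n ?add1n ?addSn ?addnS. Qed.

Lemma deg10 (l : seq ed) : count (@is_col1 F E) l = 1 -> count (@is_col2 F E) l = 0 ->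
  exists e, l = [:: Inl e].
Proof.
move=> h1 h2; have := count12 l; rewrite h1 h2 => hs.
case: l hs h1 h2 => [|[e|v] [|b l]] //= _ _ _; by exists e.
Qed.

Lemma deg01 (l : seq ed) : count (@is_col1 F E) l = 0 -> count (@is_col2 F E) l = 1 ->
  exists v, l = [:: Inr v].
Proof.
move=> h1 h2; have := count12 l; rewrite h1 h2 => hs.
case: l hs h1 h2 => [|[e|v] [|b l]] //= _ _ _; by exists v.
Qed.

Lemma sim_W (W : seq ed) : size W = 2 ->
  (forall la mu, basic_rel p q la mu -> la.2 <> W /\ mu.2 <> W) ->
  forall la mu, sim la mu -> (la.2 = W <-> mu.2 = W).
Proof.
move=> hW hB la mu S; elim: S => {la mu}.
- by [].
- move=> la mu _ H; tauto.
- move=> la mu nu _ H1 _ H2; tauto.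
- move=> la mu /hB [h1 h2]; tauto.
- move=> la la' mu mu' S1 IH1 S2 IH2 _ _; rewrite /pcat /=.
  have [z1 t1] := sim_size S1; have [z2 t2] := sim_size S2.
  have sz : forall a b : seq ed, a ++ b = W -> size a + size b = 2.
    by move=> a b h; rewrite -hW -h size_cat.
  case: (boolP (size la.2 + size mu.2 == 2)) => hs; last first.
    split => /sz; first by move/eqP: hs.
    by rewrite -z1 -z2 => h; move/eqP: hs.
  move/eqP: hs => hs.
  case: (leqP (size la.2) 1) => hl.
    rewrite (t1 hl).
    case: (leqP (size mu.2) 1) => hm; first by rewrite (t2 hm).
    have h0 : size la'.2 = 0.
      rewrite -z1; lia.
    by rewrite (size0nil h0) /=.
  have h0 : size mu.2 = 0.
    lia.
  have h0' : size mu'.2 = 0 by rewrite -z2.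
  by rewrite (size0nil h0) (size0nil h0') !cats0.
Qed.

Lemma twograph_LR : textile p q -> Lambda_T_is_2graph p q -> LR p q.
Proof.
move=> Ht [Hdeg [Hex Hun]]; split.
- move=> v e He.
  have Ex : exists f, rg f = v /\ he p f = e.
    apply: NNPP => Hno.
    have Vla : is_path p q (hv q v, [:: Inr v; Inl e]) by rewrite /is_path /= He.
    have [mu [nu [_ [_ [_ [Dm [Dn S]]]]]]] := Hex _ (1, 0) (0, 1) Vla erefl.
    case: mu Dm S => xm lm; case: nu Dn => xn ln; rewrite /pdeg /= => -[c1 c2] [c3 c4] S.
    have [e' El] := deg10 c3 c4.
    have [w En] := deg01 c1 c2.
    subst lm ln.
    have hB : forall la mu, basic_rel p q la mu ->
        la.2 <> [:: Inr v; Inl e] /\ mu.2 <> [:: Inr v; Inl e].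
      move=> la mu [f [-> ->]] /=; split; last by case.
      by case=> h1 h2; apply: Hno; exists f.
    by have := (@sim_W [:: Inr v; Inl e] erefl hB _ _ S).1 erefl.
  have [f [hr hp]] := Ex.
  exists f; split => // g [gr gp].
  have Sf := @sim_basic _ _ p q _ _ (ex_intro _ f (conj erefl erefl)).
  have Sg := @sim_basic _ _ p q _ _ (ex_intro _ g (conj erefl erefl)).
  rewrite hr hp in Sf; rewrite gr gp in Sg.
  have S := sim_trans (sim_sym Sf) Sg.
  have P1 : is_path p q (hv q v, [:: Inl (he q f)]) by rewrite /is_path /= hom_r hr.
  have P2 : is_path p q (hv q v, [:: Inl (he q g)]) by rewrite /is_path /= hom_r gr.
  have [Sm Sn] := Hun (hv q v, [:: Inl (he q f)]) (hv q (sc f), [:: Inr (sc f)])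
                      (hv q v, [:: Inl (he q g)]) (hv q (sc g), [:: Inr (sc g)])
                      P1 (conj erefl I) P2 (conj erefl I)
                      (hom_s q f) (hom_s q g) erefl erefl S.
  have [_ e1] := sim_size Sm; have [_ e2] := sim_size Sn.
  case: (e1 isT) => eq; case: (e2 isT) => _ es.
  apply: Ht => //; by rewrite ?hr ?gr ?hp ?gp.
- move=> w e He.
  have Ex : exists f, sc f = w /\ he q f = e.
    apply: NNPP => Hno.
    have Vla : is_path p q (rg e, [:: Inl e; Inr w]) by rewrite /is_path /= He.
    have [mu [nu [_ [_ [_ [Dm [Dn S]]]]]]] := Hex _ (0, 1) (1, 0) Vla erefl.
    case: mu Dm S => xm lm; case: nu Dn => xn ln; rewrite /pdeg /= => -[c1 c2] [c3 c4] S.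
    have [e' El] := deg10 c1 c2.
    have [v Em] := deg01 c3 c4.
    subst lm ln.
    have hB : forall la mu, basic_rel p q la mu ->
        la.2 <> [:: Inl e; Inr w] /\ mu.2 <> [:: Inl e; Inr w].
      move=> la mu [f [-> ->]] /=; split; first by case.
      by case=> h1 h2; apply: Hno; exists f.
    by have := (@sim_W [:: Inl e; Inr w] erefl hB _ _ S).1 erefl.
  have [f [hs hq]] := Ex.
  exists f; split => // g [gs gq].
  have Sf := @sim_basic _ _ p q _ _ (ex_intro _ f (conj erefl erefl)).
  have Sg := @sim_basic _ _ p q _ _ (ex_intro _ g (conj erefl erefl)).
  rewrite -(hom_r q f) hq hs in Sf; rewrite -(hom_r q g) gq gs in Sg.
  have S := sim_trans Sf (sim_sym Sg).
  have P1 : is_path p q (rg e, [:: Inr (rg f)]) by rewrite /is_path /= -hq hom_r.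
  have P2 : is_path p q (rg e, [:: Inr (rg g)]) by rewrite /is_path /= -gq hom_r.
  have Q1 : is_path p q (hv p (rg f), [:: Inl (he p f)]) by rewrite /is_path /= hom_r.
  have Q2 : is_path p q (hv p (rg g), [:: Inl (he p g)]) by rewrite /is_path /= hom_r.
  have [Sm Sn] := Hun (rg e, [:: Inr (rg f)]) (hv p (rg f), [:: Inl (he p f)])
                      (rg e, [:: Inr (rg g)]) (hv p (rg g), [:: Inl (he p g)])
                      P1 Q1 P2 Q2 erefl erefl erefl erefl S.
  have [_ e1] := sim_size Sm; have [_ e2] := sim_size Sn.
  case: (e1 isT) => er; case: (e2 isT) => _ ep.
  apply: Ht => //; by rewrite ?hs ?gs ?hq ?gq.
Qed.

End Aux.

Theorem theorem4p5 (F E : graph) (p q : ghom F E) :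
  textile p q -> surjective_hom p -> surjective_hom q ->
  (Lambda_T_is_2graph p q <-> LR p q).
Proof.
move=> Ht _ _; split; first exact: twograph_LR.
exact: LR_2graph.
Qed.
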